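(* In the setting below, assume $Z_1(1)\in\overline{\mathsf{Q}_1}$ and $Z_2(1)\in\overline{\mathsf{Q}_4}$, and define $\widetilde Z_1(t)=(|Z_{1x}(t)|,|Z_{1y}(t)|)$, $\widetilde Z_2(t)=(|Z_{2x}(t)|,-|Z_{2y}(t)|)$ for $t\in[0,1]$. Then for every $t\in(0,1]$, \[U(Z_1(t),Z_2(t))\ge U(\widetilde Z_1(t),\widetilde Z_2(t)),\] where $U(Z_1,Z_2)=\frac{1}{|Z_1|}+\frac{1}{|Z_2+\frac12Z_1|}+\frac{1}{|Z_2-\frac12Z_1|}$, and equality holds if and only if $Z_1(t)$ and $Z_2(t)$ lie in two adjacent closed quadrants respectively.
   Context: Planar three-body problem with masses $m_1=m_2=m_3=1$, $\chi=\{q=(q_1,q_2,q_3)\in(\mathbb{R}^2)^3: q_1+q_2+q_3=0\}$, action $\mathcal{A}(q)=\int_0^1\big(\tfrac12\sum|\dot q_i|^2+\sum_{i<j}\frac{1}{|q_i-q_j|}\big)dt$. Let $Q_{S_4}=\{q: q_1=q_2=(-a_2,0),\ q_3=(2a_2,0),\ a_2\ge0\}$ and $Q_{E_1}=\{q: q_1=(0,-2b_1),\ q_2=(-b_2,b_1),\ q_3=(b_2,b_1),\ b_1,b_2\in\mathbb{R}\}$. Let $q$ minimize $\mathcal{A}$ over $\{q\in H^1([0,1],\chi): q(0)\in Q_{S_4},\ q(1)\in Q_{E_1}\}$. Jacobi coordinates: $Z_1=q_1-q_2=(Z_{1x},Z_{1y})$, $Z_2=q_3-\frac{q_1+q_2}{2}=(Z_{2x},Z_{2y})$;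 in these coordinates $\mathcal{A}=\int_0^1\big(\tfrac14|\dot Z_1|^2+\tfrac13|\dot Z_2|^2+U(Z_1,Z_2)\big)dt$. Standing facts/assumptions: the minimizer is collision-free for $t\in(0,1]$ (so $Z_1(t)\neq0$ there and it solves Newton's equations), $Z_1(0)=0$, and $Z_2(0)=(3a_2,0)$ with $a_2>0$. $\mathsf{Q}_i$ denotes the open $i$-th quadrant of the $xy$-plane and $\overline{\mathsf{Q}_i}$ its closure; two quadrants are adjacent if they share a half-axis. *)

(* Defs.v *)
From HB Require Import structures.
From mathcomp Require Import all_boot all_order all_algebra.
From mathcomp Require Import all_classical all_reals all_analysis.
Set Implicit Arguments. Unset Strict Implicit. Unset Printing Implicit Defensive.
Import Order.TTheory GRing.Theory Num.Theory.
Import numFieldNormedType.Exports.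
Local Open Scope classical_set_scope.
Local Open Scope ring_scope.

Section ThreeBody.
Variable R : realType.

Definition point := (R * R)%type.
Definition config := (point * point * point)%type.

Definition body1 (c : config) : point := c.1.1.
Definition body2 (c : config) : point := c.1.2.
Definition body3 (c : config) : point := c.2.

Definition padd (p r : point) : point := (p.1 + r.1, p.2 + r.2).
Definition psub (p r : point) : point := (p.1 - r.1, p.2 - r.2).
Definition pscale (k : R) (p : point) : point := (k * p.1, k * p.2).

Definition pnorm (p : point) : R := Num.sqrt (p.1 ^+ 2 + p.2 ^+ 2).

Definition in_chi (c : config) : Prop :=
  padd (padd (body1 c) (body2 c)) (body3 c) = (0, 0).

Definition in_QS4 (c : config) : Prop :=
  exists a2 : R, 0 <= a2 /\ body1 c = (- a2, 0) /\ body2 c = (- a2, 0)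
                 /\ body3 c = (2 * a2, 0).
Definition in_QE1 (c : config) : Prop :=
  exists b1 b2 : R, body1 c = (0, - (2 * b1)) /\ body2 c = (- b2, b1)
                    /\ body3 c = (b2, b1).

(* H^1 on [0,1] for a scalar function f with weak derivative g:
   g is square integrable on [0,1] and f(t) = f(0) + int_0^t g. *)
Definition H1_coord (f g : R -> R) : Prop :=
  (@lebesgue_measure R).-integrable `[0, 1] (EFin \o g) /\
  (@lebesgue_measure R).-integrable `[0, 1] (EFin \o (fun s => g s ^+ 2)) /\
  forall t : R, 0 <= t <= 1 ->
    f t = f 0 + \int[@lebesgue_measure R]_(s in `[0, t]) g s.

Definition H1_point (p w : R -> point) : Prop :=
  H1_coord (fun t => (p t).1) (fun t => (w t).1) /\
  H1_coord (fun t => (p t).2) (fun t => (w t).2).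

Definition H1_path (q v : R -> config) : Prop :=
  H1_point (body1 \o q) (body1 \o v) /\
  H1_point (body2 \o q) (body2 \o v) /\
  H1_point (body3 \o q) (body3 \o v).

(* 1/r as an extended real, +oo at collisions (r = 0) *)
Definition inv_e (r : R) : \bar R := if r == 0 then +oo%E else (r^-1)%:E.

Definition potential_e (c : config) : \bar R :=
  (inv_e (pnorm (psub (body1 c) (body2 c))) +
   inv_e (pnorm (psub (body1 c) (body3 c))) +
   inv_e (pnorm (psub (body2 c) (body3 c))))%E.

(* kinetic energy (1/2) sum |v_i|^2, all masses equal to 1 *)
Definition kinetic (w : config) : R :=
  2^-1 * (pnorm (body1 w) ^+ 2 + pnorm (body2 w) ^+ 2 + pnorm (body3 w) ^+ 2).

Definition action (q v : R -> config) : \bar R :=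
  \int[@lebesgue_measure R]_(t in `[0, 1])
     ((kinetic (v t))%:E + potential_e (q t))%E.

Definition admissible (q v : R -> config) : Prop :=
  H1_path q v /\ (forall t : R, 0 <= t <= 1 -> in_chi (q t)) /\
  in_QS4 (q 0) /\ in_QE1 (q 1).

Definition is_minimizer (q : R -> config) : Prop :=
  exists v, admissible q v /\
    forall p w, admissible p w -> (action q v <= action p w)%E.

Definition collision_free (c : config) : Prop :=
  body1 c <> body2 c /\ body1 c <> body3 c /\ body2 c <> body3 c.

Definition Jac1 (c : config) : point := psub (body1 c) (body2 c).
Definition Jac2 (c : config) : point :=
  psub (body3 c) (pscale (2^-1) (padd (body1 c) (body2 c))).

(* potential in Jacobi coordinates *)
Definition U (Z1 Z2 : point) : R :=
  (pnorm Z1)^-1 + (pnorm (padd Z2 (pscale (2^-1) Z1)))^-1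
  + (pnorm (psub Z2 (pscale (2^-1) Z1)))^-1.

Definition tilde1 (p : point) : point := (`|p.1|, `|p.2|).
Definition tilde2 (p : point) : point := (`|p.1|, - `|p.2|).

End ThreeBody.

Inductive quadrant := QI | QII | QIII | QIV.

Definition in_closed_quadrant (R : realType) (i : quadrant) (p : point R) : Prop :=
  match i with
  | QI => 0 <= p.1 /\ 0 <= p.2
  | QII => p.1 <= 0 /\ 0 <= p.2
  | QIII => p.1 <= 0 /\ p.2 <= 0
  | QIV => 0 <= p.1 /\ p.2 <= 0
  end.

Definition adjacent_quadrants (i j : quadrant) : Prop :=
  match i, j with
  | QI, QII | QII, QI | QII, QIII | QIII, QII
  | QIII, QIV | QIV, QIII | QIV, QI | QI, QIV => True
  | _, _ => False
  end.

(* Main.v *)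
Require Import Defs.
From HB Require Import structures.
From mathcomp Require Import all_boot all_order all_algebra.
From mathcomp Require Import all_classical all_reals all_analysis.
From mathcomp Require Import ring lra.
Import Order.TTheory GRing.Theory Num.Theory.
Local Open Scope ring_scope.
Lemma inv_ineq (R : realType) (X Y X' Y' : R) :
  0 < X -> 0 < Y -> 0 <= X' -> 0 <= Y' ->
  X^+2 + Y^+2 = X'^+2 + Y'^+2 -> X * Y <= X' * Y' ->
  X'^-1 + Y'^-1 <= X^-1 + Y^-1 /\ (X^-1 + Y^-1 = X'^-1 + Y'^-1 <-> X * Y = X' * Y').
Proof.
move=> X0 Y0 X'0 Y'0 hs hp.
have P0 : 0 < X * Y by apply: mulr_gt0.
have P'0 : 0 < X' * Y' by lra.
have X'p : 0 < X'.
  rewrite lt0r X'0 andbT; apply/eqP=> e; by move: P'0; rewrite e mul0r ltxx.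
have Y'p : 0 < Y'.
  rewrite lt0r Y'0 andbT; apply/eqP=> e; by move: P'0; rewrite e mulr0 ltxx.
have e1 : X^-1 + Y^-1 = (X + Y) / (X * Y).
  by field; apply/andP; split; rewrite gt_eqF.
have e2 : X'^-1 + Y'^-1 = (X' + Y') / (X' * Y').
  by field; apply/andP; split; rewrite gt_eqF.
set s := X^+2 + Y^+2.
set P := X * Y. set P' := X' * Y'.
have hpP : P <= P' := hp. have P0' : 0 < P := P0. have P'0' : 0 < P' := P'0.
have hss : s = X^+2 + Y^+2 := erefl.
have sq1 : (X + Y)^+2 = s + 2 * P by rewrite /s /P; ring.
have sq2 : (X' + Y')^+2 = s + 2 * P' by rewrite /s hs /P'; ring.
have s0 : 0 < s by rewrite /s; nra.
have hP : P = X * Y := erefl. have hP' : P' = X' * Y' := erefl.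
clearbody s P P'.
have key : (X' + Y') * P <= (X + Y) * P'.
  rewrite -(ler_pXn2r (n:=2)) //; try by rewrite nnegrE; apply: mulr_ge0; lra.
  rewrite !exprMn sq1 sq2.
  have d1 : 0 <= s * (P'^+2 - P^+2) by apply: mulr_ge0; [lra | rewrite (_ : P'^+2 - P^+2 = (P'-P)*(P'+P)); [apply: mulr_ge0; lra | ring]].
  have d2 : 0 <= P * P' * (P' - P) by apply: mulr_ge0; [apply: mulr_ge0|]; lra.
  nra.
rewrite e1 e2 -hP -hP'; split.
  by rewrite ler_pdivrMr // mulrAC ler_pdivlMr.
split=> [heq|heq].
  have h : (X + Y) * P' = (X' + Y') * P.
    by move: heq => /eqP; rewrite eqr_div ?(gt_eqF P0') ?(gt_eqF P'0') // => /eqP.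
  have h2 : ((X' + Y') * P)^+2 = ((X + Y) * P')^+2 by rewrite h.
  move: h2; rewrite !exprMn sq1 sq2 => h2.
  have d1 : 0 <= s * (P'^+2 - P^+2) by apply: mulr_ge0; [lra | rewrite (_ : P'^+2 - P^+2 = (P'-P)*(P'+P)); [apply: mulr_ge0; lra | ring]].
  have d2 : 0 <= P * P' * (P' - P) by apply: mulr_ge0; [apply: mulr_ge0|]; lra.
  have d3 : s * (P'^+2 - P^+2) + 2 * (P * P' * (P' - P)) = 0 by nra.
  have d4 : P * P' * (P' - P) = 0 by lra.
  move/eqP: d4; rewrite mulf_eq0 (gt_eqF (mulr_gt0 P0' P'0')) /= subr_eq0 => /eqP; lra.
rewrite -heq in sq2 *.
have : X + Y = X' + Y'.
  apply/eqP; rewrite -(eqrXn2 (n:=2)) ?sq1 ?sq2 //; lra.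
by move=> ->.
Qed.

Ltac absc x := let H := fresh "H" in case: (lerP 0 x) => H;
  [rewrite ?(ger0_norm H) | rewrite ?(ltr0_norm H)].

Section Geo.
Variables (R : realType) (h u1 u2 v1 v2 : R).
Let Xs := (v1 + h*u1)^+2 + (v2 + h*u2)^+2.
Let Ys := (v1 - h*u1)^+2 + (v2 - h*u2)^+2.
Let Xs' := (`|v1| + h* `|u1|)^+2 + (- `|v2| + h* `|u2|)^+2.
Let Ys' := (`|v1| - h* `|u1|)^+2 + (- `|v2| - h* `|u2|)^+2.

Lemma sum_eq : Xs + Ys = Xs' + Ys'.
Proof. rewrite /Xs /Ys /Xs' /Ys'; absc u1; absc u2; absc v1; absc v2; ring. Qed.

Lemma prod_eq : Xs' * Ys' - Xs * Ys = 8 * h^+2 * (u1*u2*(v1*v2) + `|u1*u2*(v1*v2)|).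
Proof. rewrite !normrM /Xs /Ys /Xs' /Ys'; absc u1; absc u2; absc v1; absc v2; ring. Qed.
End Geo.


Lemma D_eq0 (R : realType) (x : R) : (x + `|x| = 0) <-> x <= 0.
Proof. absc x; split; lra. Qed.

Lemma core (R : realType) (h u1 u2 v1 v2 : R) : h != 0 ->
  0 < (v1 + h*u1)^+2 + (v2 + h*u2)^+2 -> 0 < (v1 - h*u1)^+2 + (v2 - h*u2)^+2 ->
  let X := Num.sqrt ((v1 + h*u1)^+2 + (v2 + h*u2)^+2) in
  let Y := Num.sqrt ((v1 - h*u1)^+2 + (v2 - h*u2)^+2) in
  let X' := Num.sqrt ((`|v1| + h* `|u1|)^+2 + (- `|v2| + h* `|u2|)^+2) in
  let Y' := Num.sqrt ((`|v1| - h* `|u1|)^+2 + (- `|v2| - h* `|u2|)^+2) in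
  X'^-1 + Y'^-1 <= X^-1 + Y^-1 /\ (X^-1 + Y^-1 = X'^-1 + Y'^-1 <-> u1*u2*(v1*v2) <= 0).
Proof.
move=> h0 hx hy.
have se := @sum_eq R h u1 u2 v1 v2; have pe := @prod_eq R h u1 u2 v1 v2.
set Xs := (v1 + h*u1)^+2 + _ in hx se pe *. set Ys := (v1 - h*u1)^+2 + _ in hy se pe *.
set Xs' := (`|v1| + h* `|u1|)^+2 + _ in se pe *. set Ys' := (`|v1| - h* `|u1|)^+2 + _ in se pe *.
move=> X Y X' Y'.
have gX' : 0 <= Xs' by rewrite /Xs' addr_ge0 ?sqr_ge0.
have gY' : 0 <= Ys' by rewrite /Ys' addr_ge0 ?sqr_ge0.
have HX : X^+2 = Xs by rewrite sqr_sqrtr // ltW.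
have HY : Y^+2 = Ys by rewrite sqr_sqrtr // ltW.
have HX' : X'^+2 = Xs' by rewrite sqr_sqrtr.
have HY' : Y'^+2 = Ys' by rewrite sqr_sqrtr.
have XY : X * Y = Num.sqrt (Xs * Ys) by rewrite sqrtrM // ltW.
have XY' : X' * Y' = Num.sqrt (Xs' * Ys') by rewrite sqrtrM.
set D := u1 * u2 * (v1 * v2) + `|u1 * u2 * (v1 * v2)| in pe.
have D0 : 0 <= D by rewrite /D; absc (u1 * u2 * (v1 * v2)); lra.
have h20 : 0 < h^+2 by rewrite exprn_even_gt0.
have le : X * Y <= X' * Y'.
  rewrite XY XY' ler_sqrt; last by apply: mulr_ge0.
  have : 0 <= 8 * h^+2 * D by apply: mulr_ge0 => //; apply: mulr_ge0; lra.
  lra.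
have pX : 0 < X by rewrite sqrtr_gt0.
have pY : 0 < Y by rewrite sqrtr_gt0.
have hs : X^+2 + Y^+2 = X'^+2 + Y'^+2 by rewrite HX HY HX' HY'.
have [H1 H2] := @inv_ineq R X Y X' Y' pX pY (sqrtr_ge0 _) (sqrtr_ge0 _) hs le.
split => //; rewrite H2 XY XY' -D_eq0.
split => [e|e].
  have : Xs * Ys = Xs' * Ys'.
    by apply/eqP; rewrite -eqr_sqrt ?e //; apply: mulr_ge0 => //; apply: ltW.
  move=> e2; have : 8 * h^+2 * D = 0 by lra.
  have h8 : 0 < 8 * h^+2 by apply: mulr_gt0.
  by move/eqP; rewrite mulf_eq0 (gt_eqF h8) /= => /eqP.
congr Num.sqrt; have : 8 * h^+2 * D = 0 by rewrite /D e mulr0.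
lra.
Qed.

Ltac psgn := solve [apply: mulr_ge0; assumption | apply: mulr_le0; assumption].
Ltac nsgn := solve [apply: mulr_ge0_le0; assumption | apply: mulr_le0_ge0; assumption].
Ltac prodsgn := first [ apply: mulr_ge0_le0; [psgn | nsgn] | apply: mulr_le0_ge0; [nsgn | psgn] ].
Ltac tq i j := exists i, j; split; [exact I | simpl; split; split; lra].
Ltac tryq := first [ tq QI QII | tq QII QI | tq QII QIII | tq QIII QII
  | tq QIII QIV | tq QIV QIII | tq QIV QI | tq QI QIV ].

Lemma quad (R : realType) (u1 u2 v1 v2 : R) :
  (exists i j : quadrant, adjacent_quadrants i j /\
    in_closed_quadrant i (u1, u2) /\ in_closed_quadrant j (v1, v2)) <->
  u1 * u2 * (v1 * v2) <= 0.
Proof.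
split.
  move=> [i [j [adj [hi hj]]]].
  case: i adj hi; case: j hj => //= -[a b] _ [c d]; prodsgn.
move=> H.
case: (ltrgt0P u1) => h1; case: (ltrgt0P u2) => h2;
case: (ltrgt0P v1) => h3; case: (ltrgt0P v2) => h4;
first [ tryq | exfalso;
  first [have p1 : 0 < u1*u2 by nra | have p1 : u1*u2 < 0 by nra];
  first [have p2 : 0 < v1*v2 by nra | have p2 : v1*v2 < 0 by nra]; nra ].
Qed.

Lemma sos_pos (R : realType) (a b c d : R) : (a, b) <> (c, d) -> 0 < (c - a)^+2 + (d - b)^+2.
Proof.
move=> H.
have g1 := sqr_ge0 (c - a); have g2 := sqr_ge0 (d - b).
rewrite lt0r addr_ge0 // andbT; apply/eqP => e; apply: H.
have e1 : (c - a)^+2 = 0 by lra.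
have e2 : (d - b)^+2 = 0 by lra.
move/eqP: e1; rewrite sqrf_eq0 subr_eq0 => /eqP ->.
by move/eqP: e2; rewrite sqrf_eq0 subr_eq0 => /eqP ->.
Qed.

Lemma le3 (R : realType) (a b c d e : R) : b + c <= d + e -> a + b + c <= a + d + e.
Proof. by rewrite -!addrA lerD2l. Qed.
Lemma eq3 (R : realType) (a b c d e : R) : (a + b + c = a + d + e) <-> (b + c = d + e).
Proof. by rewrite -!addrA; split => [/addrI|->]. Qed.

Theorem lemma5p4 (R : realType) (q : R -> config R) :
  is_minimizer q ->
  (forall t : R, 0 < t <= 1 -> collision_free (q t)) ->
  (exists a2 : R, 0 < a2 /\ Jac1 (q 0) = (0, 0) /\ Jac2 (q 0) = (3 * a2, 0)) ->
  in_closed_quadrant QI (Jac1 (q 1)) ->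
  in_closed_quadrant QIV (Jac2 (q 1)) ->
  forall t : R, 0 < t <= 1 ->
    U (tilde1 (Jac1 (q t))) (tilde2 (Jac2 (q t))) <= U (Jac1 (q t)) (Jac2 (q t)) /\
    (U (Jac1 (q t)) (Jac2 (q t)) = U (tilde1 (Jac1 (q t))) (tilde2 (Jac2 (q t))) <->
     exists i j : quadrant, adjacent_quadrants i j /\
       in_closed_quadrant i (Jac1 (q t)) /\ in_closed_quadrant j (Jac2 (q t))).
Proof.
move=> _ hcf _ _ _ t ht.
have [c12 [c13 c23]] := hcf t ht.
move: c12 c13 c23; case: (q t) => [[[x1 y1] [x2 y2]] [x3 y3]].
rewrite /collision_free /body1 /body2 /body3 /= => c12 c13 c23.
rewrite /U /Jac1 /Jac2 /tilde1 /tilde2 /pnorm /padd /psub /pscale /body1 /body2 /body3 /=.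
have hX : 0 < (x3 - 2^-1 * (x1 + x2) + 2^-1 * (x1 - x2))^+2
            + (y3 - 2^-1 * (y1 + y2) + 2^-1 * (y1 - y2))^+2.
  have -> : x3 - 2^-1 * (x1 + x2) + 2^-1 * (x1 - x2) = x3 - x2 by field.
  have -> : y3 - 2^-1 * (y1 + y2) + 2^-1 * (y1 - y2) = y3 - y2 by field.
  by apply: sos_pos.
have hY : 0 < (x3 - 2^-1 * (x1 + x2) - 2^-1 * (x1 - x2))^+2
            + (y3 - 2^-1 * (y1 + y2) - 2^-1 * (y1 - y2))^+2.
  have -> : x3 - 2^-1 * (x1 + x2) - 2^-1 * (x1 - x2) = x3 - x1 by field.
  have -> : y3 - 2^-1 * (y1 + y2) - 2^-1 * (y1 - y2) = y3 - y1 by field.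
  by apply: sos_pos.
have h0 : (2^-1 : R) != 0 by rewrite invr_eq0.
have := @core R (2^-1) (x1 - x2) (y1 - y2) (x3 - 2^-1 * (x1 + x2)) (y3 - 2^-1 * (y1 + y2)) h0 hX hY.
move=> /= [C1 C2].
rewrite !real_normK ?num_real //.
split; first exact/le3/C1.
rewrite eq3 C2; exact: (iff_sym (quad _ _ _ _ _)).
Qed.
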